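(* Let $b \ge 1$, $g = 4b^2$, and let $G$ be a gadget of type I or of type II (basic or extended) with designated vertices $p,q$. Then: (1) $G$ contains a $(2,b)$-alternating-path $R_0$ with $s_1(R_0)=t_1(R_0)=p$ and $t_2(R_0)=q$; (2) $\{p,q\}$ is reachable by a directed path inside $G$ from every vertex of $G$.
   Context: Fix an integer $b\ge1$ and set $g:=4b^2$. Each gadget has designated vertices $p,q$ with an arc $(p,q)$. A gadget of type I is a directed cycle of length at least $g$ through the arc $(p,q)$. A basic gadget of type II is a digraph consisting of vertices $p,q,r$ and a directed path $P_1$ from $r$ to $p$ of length at least $2b^2+b-2$ with $q\notin V(P_1)$, such that every vertex of $P_1$ has an arc to $q$. An extended gadget of type II consists of a basic type-II gadget $(p,q,r,P_1)$ together with a directed path $P_2$ of length at least $b$ such that the last vertex of $P_2$ is $r$, $V(P_1)\cap V(P_2)=\{r\}$, $q\notin V(P_2)$, and either there is an arc from the first vertex of $P_2$ to the second vertex of $P_1$, or there is an arc from some vertex of $V(P_1)\setminus\{r\}$ to the first vertex of $P_2$. For integers $a,b\ge1$, an $(a,b)$-alternating-path is an oriented path $R$ consisting of vertices $s_1,\dots,s_a,t_1,\dots,t_a$ and pairwise internally vertex-disjoint directed paths $Q_1,\dots,Q_a,Q'_1,\dots,Q'_{a-1}$, where $Q_i$ goes from $s_i$ to $t_i$ ($1\le i\le a$), $Q'_i$ goes from $s_{i+1}$ to $t_i$ ($1\le i\le a-1$), and $Q_2,\dots,Q_{a-1},Q'_1,\dots,Q'_{a-1}$ each have length at least $b$ ($Q_1$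 or $Q_a$ may have length zero). We write $s_i(R),t_i(R)$ for its vertices. *)

(* Defs.v *)
From mathcomp Require Import all_boot.
Set Implicit Arguments. Unset Strict Implicit. Unset Printing Implicit Defensive.

(* P is a directed path from x to y in (V,E): a nonempty duplicate-free
   vertex sequence starting at x, ending at y, consecutive vertices joined
   by arcs. Its length is (size P).-1. *)
Definition dpath (V : eqType) (E : rel V) (P : seq V) (x y : V) : Prop :=
  [/\ P != [::], head x P = x, last x P = y, uniq P & path E x (behead P)].

Definition seq_arc (V : eqType) (s : seq V) (x y : V) : Prop :=
  exists i, i.+1 < size s /\ nth x s i = x /\ nth x s i.+1 = y.

(* (a,b)-alternating path: vertices s_i, t_i (1 <= i <= a), directed paths
   Q i : s_i -> t_i (1 <= i <= a) and Q' i : s_(i+1) -> t_i (1 <= i < a);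
   the union is an oriented path, i.e. the vertex sequence
   Q_1, rev Q'_1, Q_2, rev Q'_2, ..., Q_a (shared endpoints merged) is
   duplicate-free (this gives pairwise internal disjointness);
   Q_2..Q_(a-1) and Q'_1..Q'_(a-1) have length >= b. *)
Definition alt_path (V : eqType) (E : rel V) (a b : nat)
    (s t : nat -> V) (Q Q' : nat -> seq V) : Prop :=
  [/\ (forall i, 1 <= i <= a -> dpath E (Q i) (s i) (t i)),
      (forall i, 1 <= i < a -> dpath E (Q' i) (s i.+1) (t i)),
      (forall i, 2 <= i <= a.-1 -> b <= (size (Q i)).-1),
      (forall i, 1 <= i < a -> b <= (size (Q' i)).-1)
    & uniq (Q 1 ++ flatten [seq behead (rev (Q' i)) ++ behead (Q i.+1)
                           | i <- iota 1 a.-1])].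

(* Type I gadget: the digraph is a directed cycle c (listed in cyclic
   order) of length >= g = 4 b^2 through the arc (p,q). *)
Definition gadgetI (b : nat) (V : finType) (E : rel V) (p q : V) : Prop :=
  exists c : seq V,
    [/\ uniq c, 4 * b ^ 2 <= size c, (forall v, v \in c),
        (forall x y, E x y <-> seq_arc (rcons c (head p c)) x y)
      & seq_arc (rcons c (head p c)) p q].

(* arcs of a basic type II gadget: arcs of P1 and arcs from every vertex
   of P1 to q (this includes the arc (p,q), as p lies on P1). *)
Definition basic_arcs (V : eqType) (P1 : seq V) (q x y : V) : Prop :=
  seq_arc P1 x y \/ (x \in P1 /\ y = q).

Definition basicII_path (b : nat) (V : eqType) (P1 : seq V) (p q r : V) : Prop :=
  [/\ P1 != [::], head r P1 = r, last r P1 = p, uniq P1 &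
      2 * b ^ 2 + b - 2 <= (size P1).-1 /\ q \notin P1].

Definition gadgetII_basic (b : nat) (V : finType) (E : rel V) (p q : V) : Prop :=
  exists (r : V) (P1 : seq V),
    [/\ basicII_path b P1 p q r,
        (forall v, v \in P1 \/ v = q)
      & (forall x y, E x y <-> basic_arcs P1 q x y)].

Definition gadgetII_ext (b : nat) (V : finType) (E : rel V) (p q : V) : Prop :=
  exists (r : V) (P1 P2 : seq V) (x0 y0 : V),
    [/\ basicII_path b P1 p q r,
        [/\ P2 != [::], last r P2 = r, uniq P2, b <= (size P2).-1 &
            (forall v, v \in P1 -> v \in P2 -> v = r) /\ q \notin P2],
        (x0 = head r P2 /\ y0 = nth r P1 1) \/
          (x0 \in P1 /\ x0 != r /\ y0 = head r P2),
        (forall v, [\/ v \in P1, v \in P2 | v = q])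
      & (forall x y, E x y <->
           [\/ basic_arcs P1 q x y, seq_arc P2 x y | x = x0 /\ y = y0])].

(* Main.v *)
Require Import Defs.
From mathcomp Require Import all_boot zify.
Set Implicit Arguments. Unset Strict Implicit. Unset Printing Implicit Defensive.

Section H.
Variable V : eqType.
Implicit Types (E : rel V) (s P : seq V).

Lemma seq_arc_cons a s x y : seq_arc s x y -> seq_arc (a :: s) x y.
Proof. by case=> i [hi [h1 h2]]; exists i.+1. Qed.

Lemma path_of_arcs E a s :
  (forall x y, seq_arc (a :: s) x y -> E x y) -> path E a s.
Proof.
elim: s a => [|c s IH] a H //=.
apply/andP; split.
  by apply: H; exists 0.
apply: IH => x y hxy; apply: H; exact: seq_arc_cons.
Qed.

Lemma dpath_drop E P x y n : dpath E P x y -> n < size P ->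
  dpath E (drop n P) (nth x P n) y.
Proof.
elim: n P x => [|n IH] P x.
  rewrite drop0; case: P => [|a P] [] //= _ -> *; by split.
case: P => [|a P] //= [_ /= ha hl hu hp] hn.
subst a.
case: P hl hu hp hn => [|c P] //= hl /andP [_ hu] /andP [_ hp] hn.
have h1 : dpath E (c :: P) c y by split.
by rewrite (set_nth_default c) //; exact: IH.
Qed.

Lemma dpath_rcons E P x y z : dpath E P x y -> E y z -> z \notin P ->
  dpath E (rcons P z) x z.
Proof.
case: P => [[]//|a P] [_ /= ha hl hu hp] hE hz; subst a.
split => //=.
- by rewrite last_rcons.
- by move: (rcons_uniq (x :: P) z) => /= ->; rewrite hz hu.
- by rewrite rcons_path hp hl.
Qed.

Lemma rev_behead P x y : P != [::] -> last x P = y -> y :: behead (rev P) = rev P.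
Proof.
case/lastP: P => [|P c] // _; rewrite last_rcons => ->.
by rewrite rev_rcons.
Qed.

End H.

Lemma alt2 (b : nat) (V : finType) (E : rel V) (p q s2 : V) D Q2 :
  dpath E D s2 p -> dpath E Q2 s2 q -> b <= (size D).-1 ->
  uniq (rev D ++ behead Q2) ->
  (exists (s t : nat -> V) (Q Q' : nat -> seq V),
      [/\ alt_path E 2 b s t Q Q', s 1 = p, t 1 = p & t 2 = q]).
Proof.
move=> hD hQ hb hu.
exists (fun n => if n == 1 then p else s2), (fun n => if n == 1 then p else q),
  (fun n => if n == 1 then [:: p] else Q2), (fun _ => D).
split => //; split.
- by case=> [|[|[|i]]] //= _; split.
- by case=> [|[|i]] //= _.
- by case=> [|[|[|i]]].
- by case=> [|[|i]].
- have [hD0 _ hl _ _] := hD.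
  rewrite /= cats0; change (uniq ((p :: behead (rev D)) ++ behead Q2)).
  by rewrite (rev_behead hD0 hl).
Qed.

Lemma typeII_core (b : nat) (V : finType) (E : rel V) (p q r : V) P1 :
  1 <= b -> basicII_path b P1 p q r ->
  (forall x y, basic_arcs P1 q x y -> E x y) ->
  (exists (s t : nat -> V) (Q Q' : nat -> seq V),
      [/\ alt_path E 2 b s t Q Q', s 1 = p, t 1 = p & t 2 = q]) /\
  (forall v, v \in P1 -> dpath E [:: v; q] v q).
Proof.
move=> hb [hP1 hh hl hu [hs hq]] hE.
have Hvq v : v \in P1 -> dpath E [:: v; q] v q.
  move=> hv; split => //=.
  - by rewrite inE andbT; apply/eqP => e; subst v; rewrite hv in hq.
  - by rewrite andbT; apply: hE; right.
split => //.
have hdp : dpath E P1 r p.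
  split => //; move: hh hE; clear; case: P1 => [|a P0] //= -> hE.
  by apply: path_of_arcs => x y h; apply: hE; left.
have hsz : b < size P1 by nia.
set n0 := size P1 - b.+1.
have hn0 : n0 < size P1 by rewrite /n0; lia.
have hD := dpath_drop hdp hn0.
have hs2 : nth r P1 n0 \in P1 by apply: mem_nth.
apply: (@alt2 b V E p q _ _ _ hD (Hvq _ hs2)).
  by rewrite size_drop /n0; lia.
rewrite /= cat_uniq rev_uniq drop_uniq //= mem_rev orbF andbT.
by apply/negP => /mem_drop h; rewrite h in hq.
Qed.

Lemma typeI_core (b : nat) (V : finType) (E : rel V) (p q : V) :
  1 <= b -> gadgetI b E p q ->
  (exists (s t : nat -> V) (Q Q' : nat -> seq V),
      [/\ alt_path E 2 b s t Q Q', s 1 = p, t 1 = p & t 2 = q]) /\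
  (forall v : V, exists (w : V) (P : seq V), (w = p \/ w = q) /\ dpath E P v w).
Proof.
move=> hb [c [hu hs hall hE [i [hi [e1 e2]]]]].
have hb2 : b <= b ^ 2 by rewrite -mulnn leq_pmulr.
have hc0 : 0 < size c by lia.
move: hi; rewrite size_rcons ltnS => hi.
move: e1 e2; rewrite !nth_rcons hi.
move=> e1 e2.
have e3 : head p (rot i.+1 c) = q.
  move: e2; case: ifP => hlt.
    by rewrite /rot (drop_nth p hlt) /= => ->.
  have -> : i.+1 = size c by move/negbT: hlt; rewrite -leqNgt => h; apply/eqP; rewrite eqn_leq hi h.
  by rewrite eqxx rot_size.
have e4 : last p (rot i.+1 c) = p.
  by rewrite /rot last_cat (take_nth p hi) last_rcons.
have hcyc : cycle E c.
  case: c hu hs hall hE hc0 {e1 e2 e3 e4 hi} => [|a c'] // _ _ _ hE _ /=.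
  by apply: path_of_arcs => x y h; apply/hE.
have hcr : cycle E (rot i.+1 c) by rewrite rot_cycle.
have hur : uniq (rot i.+1 c) by rewrite rot_uniq.
have hsr : size (rot i.+1 c) = size c by rewrite size_rot.
have hmr : forall v, v \in rot i.+1 c by move=> v; rewrite mem_rot.
case: (rot i.+1 c) e3 e4 hcr hur hsr hmr => [|a C] //=; first by lia.
move=> ea e4 hcr hur hsr hmr; subst a.
have hD : dpath E (q :: C) q p.
  split => //; move: hcr; rewrite /= rcons_path => /andP [] //.
split.
  apply: (@alt2 b V E p q q (q :: C) [:: q] hD).
  - by split.
  - by rewrite /=; lia.
  - by rewrite cats0 rev_uniq.
move=> v; exists p, (drop (index v (q :: C)) (q :: C)); split; first by left.
have := dpath_drop hD (n := index v (q :: C)).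
by rewrite index_mem nth_index //; apply.
Qed.

Theorem lemma2p4 (b : nat) (V : finType) (E : rel V) (p q : V) :
  1 <= b ->
  gadgetI b E p q \/ gadgetII_basic b E p q \/ gadgetII_ext b E p q ->
  (exists (s t : nat -> V) (Q Q' : nat -> seq V),
      [/\ alt_path E 2 b s t Q Q', s 1 = p, t 1 = p & t 2 = q]) /\
  (forall v : V, exists (w : V) (P : seq V), (w = p \/ w = q) /\ dpath E P v w).
Proof.
move=> hb [hI|[[r [P1 [hbp hall hE]]]|[r [P1 [P2 [x0 [y0 [hbp hP2 hx hall hE]]]]]]]].
- exact: typeI_core.
- have [h1 h2] := @typeII_core b V E p q r P1 hb hbp (fun x y h => proj2 (hE x y) h).
  split => // v; exists q.
  case: (hall v) => [hv|->].
    by exists [:: v; q]; split; [right | exact: h2].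
  by exists [:: q]; split; [right | split].
- have [h1 h2] := @typeII_core b V E p q r P1 hb hbp (fun x y h => proj2 (hE x y) (Or31 _ _ h)).
  split => // v; exists q.
  case: (hall v) => [hv|hv|->].
  + by exists [:: v; q]; split; [right | exact: h2].
  + have [hP2n hl2 hu2 _ [_ hq2]] := hP2.
    have hd2 : dpath E P2 (head r P2) r.
      move: hE hP2n hl2 hu2; clear; case: P2 => [|a P0] //= hE _ hl hu; split => //.
      by apply: path_of_arcs => x y h; apply/hE; apply: Or32.
    have hn : index v P2 < size P2 by rewrite index_mem.
    have := dpath_drop hd2 hn; rewrite nth_index // => hd.
    exists (rcons (drop (index v P2) P2) q); split; first by right.
    apply: (dpath_rcons hd).
      apply/hE; apply: Or31; right; split => //.
      have [hP1 hh _ _ _] := hbp.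
      by move: hP1 hh; case: (P1) => [|a P0] //= _ ->; rewrite inE eqxx.
    by apply/negP => /mem_drop h; rewrite h in hq2.
  + by exists [:: q]; split; [right | split].
Qed.
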